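(* Let $G=(V,E)$ be a finite simple undirected graph and let $\sigma=(\lambda_1,\lambda_2,\ldots,\lambda_m)$ be a coding sequence of $G$. Write $V=\{v_1,\ldots,v_m\}$, where $v_i$ corresponds to $\lambda_i$, and put $\mu(v_i)=\lambda_i$. Let $\{p_1,\ldots,p_k\}$ be the set of all distinct prime factors of $\lambda(\sigma)$, and suppose $G$ has $s\ge 0$ isolated vertices (so that $\lambda_1=\cdots=\lambda_s=1$ correspond to the isolated vertices $v_1,\ldots,v_s$). Define $S_j=\{v_j\}$ for $j=1,\ldots,s$ and $S_{s+j}=\{v_i\in V : p_j \text{ divides } \lambda_i\}$ for $j=1,\ldots,k$. Then $S=\{S_j : j=1,\ldots,s+k\}$ is a total clique covering of $G$. Moreover, for any vertex $v$ and any nonempty set $\{j_1,\ldots,j_r\}\subseteq\{1,\ldots,k\}$, we have $v\in S_{s+j_1}\cap\cdots\cap S_{s+j_r}$ and $v\notin S_{s+j}$ for all $j\in\{1,\ldots,k\}\setminus\{j_1,\ldots,j_r\}$ if and only if $\mu(v)=p_{j_1}p_{j_2}\cdots p_{j_r}$; and $v\in S_1\cup\cdots\cup S_s$ if and only if $\mu(v)=1$.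
   Context: All graphs are finite, simple and undirected. For a finite sequence $\sigma=(a_1,\ldots,a_m)$ of positive integers, $G[\sigma]$ is the graph with vertices $v_1,\ldots,v_m$ ($a_i$ is the label of $v_i$) where $v_iv_j$ is an edge iff $i\ne j$ and $\gcd(a_i,a_j)>1$. A coding sequence of a graph $G$ with $s\ge 0$ isolated vertices is defined as follows: if $G$ has a single vertex, $\sigma=(1)$; otherwise let $G_1$ be $G$ with its isolated vertices deleted, let $\sigma_1$ be a finite non-decreasing sequence of square-free integers greater than $1$ with $G_1\cong G[\sigma_1]$, and let $\sigma$ be $\sigma_1$ prefixed by $s$ entries equal to $1$; then $G\cong G[\sigma]$, the vertex with label $1$ being the isolated vertices. Entries greater than $1$ are non-trivial, and $\lambda(\sigma)$ denotes the least common multiple of the non-trivial entries of $\sigma$. A clique is a set of pairwise adjacent vertices. A set $S$ of cliques of $G$ is a total clique covering of $G$ if every vertex lies in some member of $S$ and every edge has both endpoints in some member of $S$. *)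

(* Defs.v *)
From mathcomp Require Import all_boot.
Set Implicit Arguments. Unset Strict Implicit. Unset Printing Implicit Defensive.

Definition squarefree (n : nat) : bool := all (fun p => logn p n <= 1) (primes n).

Definition isolated (T : finType) (e : rel T) (x : T) : bool := [forall y, ~~ e x y].

Definition graph_of_seq (m : nat) (sigma : seq nat) : rel 'I_m :=
  fun i j => (i != j) && (1 < gcdn (nth 0 sigma i) (nth 0 sigma j)).

(* sigma is a coding sequence of the graph (T,e), where v i is the vertex
   carrying label sigma_i (0-based indices). *)
Definition coding_seq (T : finType) (e : rel T) (m : nat) (v : 'I_m -> T)
    (sigma : seq nat) : Prop :=
  let s := #|[set x | isolated e x]| in
  [/\ size sigma = m /\ bijective v,
      (forall i j : 'I_m, e (v i) (v j) = graph_of_seq sigma i j),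
      (forall i : 'I_m, i < s -> nth 0 sigma i = 1),
      (forall i : 'I_m, s <= i -> 1 < nth 0 sigma i /\ squarefree (nth 0 sigma i)) &
      sorted leq (drop s sigma)].

Definition lambda (sigma : seq nat) : nat := \big[lcmn/1]_(x <- sigma | 1 < x) x.

(* The family S_j (0-based): for j < s, S_j = {v_j}; for j = s + t (t < k),
   S_j = {v_i : p_t | sigma_i}, where p_0 < ... < p_(k-1) are the primes of lambda. *)
Definition Sfam (T : finType) (m : nat) (v : 'I_m -> T) (sigma : seq nat)
    (s j : nat) : {set T} :=
  if j < s then [set v i | i : 'I_m & (i : nat) == j]
  else [set v i | i : 'I_m & nth 0 (primes (lambda sigma)) (j - s) %| nth 0 sigma i].

Definition clique (T : finType) (e : rel T) (A : {set T}) : Prop :=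
  forall x y, x \in A -> y \in A -> x != y -> e x y.

Definition total_clique_cover (T : finType) (e : rel T) (F : seq {set T}) : Prop :=
  [/\ (forall A, A \in F -> clique e A),
      (forall x, exists2 A, A \in F & x \in A) &
      (forall x y, e x y -> exists2 A, A \in F & (x \in A) && (y \in A))].

(* Main.v *)
Require Import Defs.
From mathcomp Require Import all_boot.
From mathcomp Require Import zify.

Lemma lambda_pos (sigma : seq nat) : 0 < lambda sigma.
Proof.
elim: sigma => [|x l IH]; rewrite /lambda ?big_nil // big_cons.
case: ifP => // hx; rewrite lcmn_gt0 IH andbT; lia.
Qed.

Lemma lambda_dvd (sigma : seq nat) x : x \in sigma -> 1 < x -> x %| lambda sigma.
Proof.
elim: sigma => [|y l IH] //; rewrite inE => /orP [/eqP -> | hx] h1;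
  rewrite /lambda big_cons.
  by rewrite h1 dvdn_lcml.
case: ifP => _; last exact: IH.
by apply: dvdn_trans (IH hx h1) _; rewrite dvdn_lcmr.
Qed.

Theorem lemma1 (T : finType) (e : rel T) (m : nat) (v : 'I_m -> T)
    (sigma : seq nat) (s : nat) :
  symmetric e -> irreflexive e ->
  coding_seq e v sigma ->
  s = #|[set x | isolated e x]| ->
  let ps := primes (lambda sigma) in
  let k := size ps in
  let S := fun j => Sfam v sigma s j in
  total_clique_cover e [seq S j | j <- iota 0 (s + k)] /\
  (forall (i : 'I_m) (J : {set 'I_k}), J != set0 ->
     ((forall j : 'I_k, j \in J -> v i \in S (s + j)) /\
      (forall j : 'I_k, j \notin J -> v i \notin S (s + j)))
     <-> nth 0 sigma i = \prod_(j in J) nth 0 ps j) /\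
  (forall i : 'I_m, (exists2 j, j < s & v i \in S j) <-> nth 0 sigma i = 1).
Proof.
move=> sym irr [[sz bij] Hedge H1 H2 Hsort] Hs ps k S.
rewrite -Hs in H1 H2 Hsort.
have vinj : injective v by apply: bij_inj.
have Hge : forall i : 'I_m, ~~ (i < s) -> 1 < nth 0 sigma i.
  by move=> i; rewrite -leqNgt => h; case: (H2 i h).
have labpos : forall i : 'I_m, 0 < nth 0 sigma i.
  move=> i; case: (ltnP i s) => h; first by rewrite H1.
  by have := Hge i; rewrite -leqNgt h => /(_ isT); lia.
have inseq : forall i : 'I_m, nth 0 sigma i \in sigma.
  by move=> i; apply: mem_nth; rewrite sz.
have memS : forall (i : 'I_m) (t : nat),
    (v i \in S (s + t)) = (nth 0 ps t %| nth 0 sigma i).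
  by move=> i0 t; rewrite /S /Sfam ltnNge leq_addr /= addKn mem_imset // inE.
have memS0 : forall (i : 'I_m) (j : nat), j < s ->
    (v i \in S j) = (i == j :> nat).
  by move=> i0 j hj; rewrite /S /Sfam hj mem_imset // inE.
have prime_ps : forall t, t < k -> prime (nth 0 ps t).
  move=> t ht; have := mem_nth 0 ht; rewrite mem_primes.
  by case/and3P.
have in_ps : forall (i : 'I_m) p, prime p -> p %| nth 0 sigma i ->
    index p ps < k /\ nth 0 ps (index p ps) = p.
  move=> i p pp hd.
  have hgt : 1 < nth 0 sigma i.
    have := dvdn_leq (labpos i) hd; have := prime_gt1 pp; lia.
  have hps : p \in ps.
    rewrite mem_primes pp lambda_pos /=.
    exact: (dvdn_trans hd (lambda_dvd _ _ (inseq i) hgt)).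
  by split; [rewrite index_mem | apply: nth_index].
have ps_inj : forall j j' : 'I_k, nth 0 ps j = nth 0 ps j' -> j = j'.
  move=> j j' h; apply: val_inj => /=.
  by apply/eqP; rewrite -(nth_uniq 0 (ltn_ord j) (ltn_ord j') (primes_uniq _)) h.
have surj : forall x : T, exists i : 'I_m, x = v i.
  by case: bij => g _ gK x; exists (g x); rewrite gK.
split; [split|split].
- move=> A /mapP [j hjI ->] x y.
  case: (ltnP j s) => hj.
    case: (surj x) => i ->; case: (surj y) => i' ->.
    rewrite !memS0 // => /eqP h /eqP h'; rewrite (_ : i = i') ?eqxx //.
    by apply: val_inj; rewrite /= h h'.
  case: (surj x) => i ->; case: (surj y) => i' ->.
  rewrite -(subnKC hj) !memS => h h' hne.
  rewrite Hedge /graph_of_seq.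
  have -> : (i != i') by apply: contra hne => /eqP ->.
  have hjk : j - s < k.
    by move: hjI; rewrite mem_iota; lia.
  have pp := prime_ps _ hjk.
  have hg : nth 0 ps (j - s) %| gcdn (nth 0 sigma i) (nth 0 sigma i') by rewrite dvdn_gcd h h'.
  have := dvdn_leq _ hg; rewrite gcdn_gt0 labpos /= => /(_ isT).
  have := prime_gt1 pp; lia.
- move=> x; case: (surj x) => i ->.
  case: (ltnP i s) => hi.
    exists (S i); first by apply: map_f; rewrite mem_iota; lia.
    by rewrite memS0 // eqxx.
  have h1 : 1 < nth 0 sigma i by apply: Hge; rewrite -leqNgt.
  have pp := pdiv_prime h1; have hd := pdiv_dvd (nth 0 sigma i).
  case: (in_ps i _ pp hd) => hk hn.
  exists (S (s + index (pdiv (nth 0 sigma i)) ps)).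
    by apply: map_f; rewrite mem_iota; lia.
  by rewrite memS hn.
- move=> x y; case: (surj x) => i ->; case: (surj y) => i' ->.
  rewrite Hedge /graph_of_seq => /andP [_ hg].
  set g := gcdn _ _ in hg.
  have pp := pdiv_prime hg.
  have hdi : pdiv g %| nth 0 sigma i := dvdn_trans (pdiv_dvd g) (dvdn_gcdl _ _).
  have hdi' : pdiv g %| nth 0 sigma i' := dvdn_trans (pdiv_dvd g) (dvdn_gcdr _ _).
  case: (in_ps i _ pp hdi) => hk hn.
  exists (S (s + index (pdiv g) ps)).
    by apply: map_f; rewrite mem_iota; lia.
  by rewrite !memS hn hdi hdi'.
- move=> i J HJ.
  have key : (forall j : 'I_k, j \in J -> v i \in S (s + j)) /\
     (forall j : 'I_k, j \notin J -> v i \notin S (s + j)) <->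
     (forall j : 'I_k, (j \in J) = (nth 0 ps j %| nth 0 sigma i)).
    split.
      move=> [ha hb] j; rewrite -memS; case: (boolP (j \in J)) => hj.
        by rewrite ha.
      by rewrite (negbTE (hb j hj)).
    move=> h; split => j hj; rewrite memS -h //.
  rewrite key; clear key.
  have Pdvd : forall j : 'I_k,
      (nth 0 ps j %| \prod_(j0 in J) nth 0 ps j0) = (j \in J).
    move=> j; rewrite Euclid_dvd_prod ?(prime_ps _ (ltn_ord j)) // big_orE.
    apply/existsP/idP => [[j' /andP [hj' hd]] | hj].
      rewrite dvdn_prime2 ?(prime_ps _ (ltn_ord j)) ?(prime_ps _ (ltn_ord j')) // in hd.
      by rewrite (ps_inj _ _ (eqP hd)).
    by exists j; rewrite hj dvdnn.
  split; last first.
    by move=> -> j; rewrite Pdvd.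
  move=> H.
  case: (ltnP i s) => hi.
    case/set0Pn: HJ => j hj; move: (H j); rewrite hj H1 // dvdn1 => /esym /eqP hp.
    by have := prime_ps _ (ltn_ord j); rewrite hp.
  case: (H2 i hi) => hgt hsq.
  set n := nth 0 sigma i in H hgt hsq *.
  have n0 : 0 < n by lia.
  have -> : n = \prod_(q <- primes n) q.
    rewrite {1}(prod_prime_decomp n0) prime_decompE big_map; apply: eq_big_seq => q hq /=.
    have b : logn q n <= 1 by move/allP: hsq => /(_ q hq).
    have a : 0 < logn q n by rewrite logn_gt0.
    have -> : logn q n = 1 by lia.
    by rewrite expn1.
  have -> : \prod_(j in J) nth 0 ps j = \prod_(q <- [seq nth 0 ps j | j : 'I_k <- enum J]) q.
    by rewrite big_map big_enum.
  apply: perm_big; apply: uniq_perm; first exact: primes_uniq.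
    rewrite map_inj_in_uniq ?enum_uniq // => a b _ _; exact: ps_inj.
  move=> q; apply/idP/mapP.
    rewrite mem_primes => /and3P [qp _ qd].
    case: (in_ps i _ qp qd) => hk hn.
    exists (Ordinal hk); last by rewrite /= hn.
    by rewrite mem_enum H /= hn.
  move=> [j]; rewrite mem_enum H => hd ->.
  by rewrite mem_primes (prime_ps _ (ltn_ord j)) n0 hd.
- move=> i; split.
    by move=> [j hj]; rewrite memS0 // => /eqP h; apply: H1; rewrite h.
  move=> h1; have hi : i < s.
    rewrite ltnNge; apply/negP => hi; case: (H2 i hi); rewrite h1 //.
  by exists i => //; rewrite memS0 // eqxx.
Qed.
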